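(* For every $N\ge2$, the set $\mathbb{S}_N\setminus\{\mathrm{id}\}$ is a union of pairwise disjoint subsets, each of which is either (a) a single permutation $\sigma$ for which there is an entry $\beta$ with $\sigma(\beta+1)=\beta$ and all entries of $\sigma$ in positions after $\beta+1$ greater than $\beta$; or (b) a pair $\{\sigma,\sigma'\}$ of permutations that differ only by an interchange of two adjacent entries $\alpha,\beta$, such that some entry $\gamma$ with $\gamma<\alpha$ and $\gamma<\beta$ appears to the right of $\alpha$ and $\beta$.
   Context: Permutations are written in one-line notation $\sigma(1)\sigma(2)\cdots\sigma(N)$, and ''position $k$'' refers to the $k$-th entry $\sigma(k)$. *)

(* Defs.v *)
From mathcomp Require Import all_boot all_fingroup.
Set Implicit Arguments. Unset Strict Implicit. Unset Printing Implicit Defensive.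

(* One-line notation: s(0) s(1) ... s(N-1), position k means entry s k.
   (0-indexed; the conditions below are invariant under the shift
   1-indexed -> 0-indexed.) *)

Definition typeA (N : nat) (s : 'S_N) : Prop :=
  exists (b : 'I_N) (h : b.+1 < N),
    s (Ordinal h) = b /\ forall k : 'I_N, b.+1 < k -> b < s k.

Definition typeB (N : nat) (s s' : 'S_N) : Prop :=
  exists i j : 'I_N,
    [/\ val j = i.+1, s' i = s j, s' j = s i,
        (forall k : 'I_N, k != i -> k != j -> s' k = s k) &
        exists k : 'I_N, [/\ j < k, s k < s i & s k < s j]].

Definition good_block (N : nat) (B : {set 'S_N}) : Prop :=
  (exists s, B = [set s] /\ typeA s) \/
  (exists s s', B = [set s; s'] /\ typeB s s').

(* Main.v *)
Require Import Defs.
From mathcomp Require Import all_boot all_fingroup.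
From mathcomp Require Import zify.
Set Implicit Arguments. Unset Strict Implicit. Unset Printing Implicit Defensive.

Definition validb {N} (s : 'S_N) (i j : 'I_N) : bool :=
  (nat_of_ord j == i.+1) && [exists k : 'I_N, [&& j < k, s k < s i & s k < s j]].

Definition maxv {N} (s : 'S_N) (i j : 'I_N) : bool :=
  validb s i j && [forall i' : 'I_N, forall j' : 'I_N, validb s i' j' ==> (i' <= i)].

Lemma maxv_swap N (s : 'S_N) i j : maxv s i j -> maxv (tperm i j * s)%g i j.
Proof.
move=> /andP[/andP[/eqP ji /existsP[k0 /and3P[jk0 k0i k0j]]] /forallP mx].
have neq (x y : 'I_N) : nat_of_ord x != nat_of_ord y -> x != y.
  by apply: contra => /eqP ->.
have sE x : x != i -> x != j -> (tperm i j * s)%g x = s x.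
  by move=> xi xj; rewrite permM tpermD // eq_sym.
have sI : (tperm i j * s)%g i = s j by rewrite permM tpermL.
have sJ : (tperm i j * s)%g j = s i by rewrite permM tpermR.
apply/andP; split.
  rewrite /validb ji eqxx /=; apply/existsP; exists k0.
  rewrite sI sJ sE ?k0i ?k0j ?andbT; [lia | apply: neq; lia | apply: neq; lia].
apply/forallP=> i'; apply/forallP=> j'; apply/implyP.
move=> /andP[/eqP ji' /existsP[k /and3P[j'k ki' kj']]].
rewrite leqNgt; apply/negP => ii'.
case: (boolP (nat_of_ord i' == i.+1)) => [/eqP e|ne].
  have i'j : i' = j by apply: val_inj; rewrite /= e ji.
  subst i'.
  rewrite sJ in ki'.
  rewrite !sE in ki' kj'; try (apply: neq; lia).
  have Hv := mx j; move/forallP: Hv => Hv; have := Hv j'.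
  rewrite leqNgt ii' implybF /validb ji' eqxx /= => /existsPn Hn.
  have Hk' : s j <= s k.
    rewrite leqNgt; apply: contra (Hn k) => H; rewrite H kj' /= andbT; lia.
  case: (boolP (nat_of_ord k0 == j')) => [/eqP e0|ne0].
    have : k0 = j' by apply: val_inj.
    move=> ?; subst k0; lia.
  have Hk0 : s j' <= s k0.
    rewrite leqNgt; apply: contra (Hn k0) => H; rewrite H k0j /= andbT; lia.
  lia.
rewrite !sE in ki' kj'; try (apply: neq; lia).
have := mx i'; move/forallP => /(_ j').
rewrite leqNgt ii' implybF /validb ji' eqxx /= => /existsPn /(_ k).
by rewrite ki' kj' andbT; lia.
Qed.


Lemma maxv_uniq N (s : 'S_N) i j i' j' : maxv s i j -> maxv s i' j' -> i = i' /\ j = j'.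
Proof.
move=> H H'.
move: (H) (H') => /andP[V /forallP mx] /andP[V' /forallP mx'].
have /implyP h1 := forallP (mx i') j'.
have /implyP h2 := forallP (mx' i) j.
have a := h1 V'; have b := h2 V.
move: V V' => /andP[/eqP ji _] /andP[/eqP ji' _].
have e : i = i' by apply: val_inj => /=; lia.
split => //; apply: val_inj => /=; lia.
Qed.

Definition g {N} (s : 'S_N) : 'S_N :=
  if [pick p : 'I_N * 'I_N | maxv s p.1 p.2] is Some p then (tperm p.1 p.2 * s)%g else s.

Lemma g_spec N (s : 'S_N) :
  (exists i j, maxv s i j /\ g s = (tperm i j * s)%g) \/
  ((forall i j, maxv s i j = false) /\ g s = s).
Proof.
rewrite /g; case: pickP => [[i j] /= H | H].
  by left; exists i, j.
by right; split => // i j; exact: (H (i, j)).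
Qed.

Lemma g_invol N (s : 'S_N) : g (g s) = s.
Proof.
case: (g_spec s) => [[i [j [H ->]]] | [H ->]].
  have H1 := maxv_swap H.
  case: (g_spec (tperm i j * s)%g) => [[i' [j' [H2 ->]]] | [H2 _]].
    have [<- <-] := maxv_uniq H1 H2.
    by rewrite mulgA tperm2 mul1g.
  by rewrite H2 in H1.
case: (g_spec s) => [[i [j [H2 _]]] | [_ ->]] //.
by rewrite H in H2.
Qed.

Lemma valid1 N (i j : 'I_N) : validb 1%g i j = false.
Proof.
apply/negbTE; rewrite /validb negb_and; apply/orP; right.
apply/existsPn => k; rewrite !perm1; apply/negP => /and3P[a b c]; lia.
Qed.

Lemma exists_maxv N (s : 'S_N) i j : validb s i j -> exists i' j', maxv s i' j'.
Proof.
move=> V.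
case: (@arg_maxnP _ (i, j) (fun p : 'I_N * 'I_N => validb s p.1 p.2)
   (fun p => nat_of_ord p.1) V) => [[i' j'] /= V' mx].
exists i', j'; rewrite /maxv V' /=.
apply/forallP => a; apply/forallP => b; apply/implyP => Vab.
exact: (mx (a, b) Vab).
Qed.

Lemma noval_typeA N (s : 'S_N) : s != 1%g ->
  (forall i j, validb s i j = false) -> typeA s.
Proof.
move=> s1 nv.
have [x0 sx0] : exists x, s x != x.
  apply/existsP; apply: contraR s1 => /existsPn H; apply/eqP/permP => x.
  by rewrite perm1; apply/eqP; move: (H x); rewrite negbK.
case: (@arg_minnP _ x0 (fun x => s x != x) (fun x => nat_of_ord x) sx0)
  => p sp pmin.
have M (x : 'I_N) : x < p -> s x = x.
  move=> h; apply/eqP; apply: contraTT h => hx; rewrite -leqNgt; exact: pmin _ hx.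
have Lp (x : 'I_N) : p <= x -> p <= s x.
  move=> hx; rewrite leqNgt; apply/negP => h.
  have e : s (s x) = s x by apply: M.
  have := perm_inj e => e2; rewrite e2 in h; lia.
have sp' : nat_of_ord (s p) != p.
  by apply: contra sp => /eqP e; apply/eqP; apply: val_inj.
have spp : p < s p by have := Lp p (leqnn _); lia.
set q := (s^-1)%g p.
have sq : s q = p by rewrite /q permKV.
have qp : p < q.
  rewrite ltnNge leq_eqVlt negb_or; apply/andP; split.
    apply/eqP => e; have e2 : q = p by apply: val_inj.
    by move: sp; rewrite -{1}e2 sq eqxx.
  by apply/negP => h; have := M q h; rewrite sq => e; rewrite -e ltnn in h.
have ne_q (x : 'I_N) : x != q -> nat_of_ord (s x) != p.
  move=> xq; apply: contra xq => /eqP e; apply/eqP; apply: (@perm_inj _ s).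
  by rewrite sq; apply: val_inj.
have q1 : nat_of_ord q = p.+1.
  apply/eqP; rewrite eqn_leq qp andbT leqNgt; apply/negP => h.
  have hj : p.+1 < N by have := ltn_ord q; lia.
  set j := Ordinal hj.
  have jq : j != q by apply/eqP => e; move: h; rewrite -e /= ltnn.
  have H1 := ne_q j jq; have H2 := Lp j (leqnSn p).
  have := nv p j; rewrite /validb /= eqxx /= => /existsPn /(_ q).
  rewrite sq /=; move: H1 H2; rewrite /= => H1 H2.
  by move/negP; apply; apply/and3P; split; lia.
have hq : p.+1 < N by rewrite -q1 ltn_ord.
exists p, hq; split.
  by have -> : Ordinal hq = q by apply: val_inj; rewrite /= q1.
move=> k hk.
have kq : k != q by apply/eqP => e; move: hk; rewrite e q1 ltnn.
have := ne_q k kq; have := Lp k (ltnW (ltnW hk)); lia.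
Qed.

Lemma g_nonid N (x : 'S_N) : x != 1%g -> g x != 1%g.
Proof.
move=> x1; case: (g_spec x) => [[i [j [H E]]] | [_ ->]] //.
have := maxv_swap H; rewrite -E => /andP[V _].
by apply/eqP => e; rewrite e valid1 in V.
Qed.

Lemma f_eq N (x y : 'S_N) :
  ([set x; g x] == [set y; g y]) = (y == x) || (y == g x).
Proof.
apply/eqP/orP.
  move=> e; have : y \in [set x; g x] by rewrite e setU11.
  by rewrite !inE => /orP.
case=> /eqP ->; first by [].
by rewrite g_invol setUC.
Qed.

Theorem lemma3p9 (N : nat) (hN : 2 <= N) :
  exists P : {set {set 'S_N}},
    partition P [set s : 'S_N | s != 1%g] /\
    forall B, B \in P -> good_block B.
Proof.
set D := [set s : 'S_N | s != 1%g].
exists (preim_partition (fun s => [set s; g s]) D); split.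
  exact: preim_partitionP.
move=> B /imsetP[x xD ->].
have x1 : x != 1%g by move: xD; rewrite inE.
have -> : [set y in D | [set x; g x] == [set y; g y]] = [set x; g x].
  apply/setP => y; rewrite !inE f_eq.
  case: (boolP (y == x)) => [/eqP -> | _] /=; first by rewrite x1.
  case: (boolP (y == g x)) => [/eqP -> | _] /=; last by rewrite andbF.
  by rewrite andbT g_nonid.
case: (g_spec x) => [[i [j [H ->]]] | [H ->]].
  right; exists x, (tperm i j * x)%g; split => //.
  move: H => /andP[/andP[/eqP ji /existsP[k /and3P[jk ki kj]]] _].
  exists i, j; split => //.
  - by rewrite permM tpermL.
  - by rewrite permM tpermR.
  - by move=> k' a b; rewrite permM tpermD // eq_sym.
  - by exists k; split.
left; exists x; split; first by rewrite setUid.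
apply: noval_typeA; first by move: xD; rewrite inE.
move=> i j; apply/negbTE/negP => V.
have [i' [j' M]] := exists_maxv V.
by rewrite H in M.
Qed.
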